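(* Let $\Bbbk$ be a field of characteristic $0$ and let $J$ be a Jordan dialgebra over $\Bbbk$ generated by one element. Then $J$ is special, i.e. $J$ is isomorphic to a subdialgebra of $D^{(+)}$ for some associative dialgebra $D$.
   Context: A 0-dialgebra is a vector space with bilinear operations $\vdash,\dashv$ satisfying $(x\dashv y)\vdash z=(x\vdash y)\vdash z$ and $x\dashv(y\vdash z)=x\dashv(y\dashv z)$. For a nonassociative multilinear polynomial $f(x_1,\dots,x_n)$ and an index $i$, $f(x_1,\dots,\dot x_i,\dots,x_n)$ denotes the dialgebra polynomial obtained by replacing each product $uv$ in each monomial by $u\dashv v$ if $x_i$ occurs in $u$ and by $u\vdash v$ otherwise (i.e. all operation signs point to $x_i$). A Jordan dialgebra is a 0-dialgebra satisfying $x_1\vdash x_2=x_2\dashv x_1$ and $J(x_1,\dots,\dot x_i,\dots,x_4)=0$ for $i=1,2,3,4$, where $J(x_1,x_2,x_3,x_4)=x_1(x_2(x_3x_4))+(x_2(x_1x_3))x_4+x_3(x_2(x_1x_4))-(x_1x_2)(x_3x_4)-(x_1x_3)(x_2x_4)-(x_3x_2)(x_1x_4)$. An associative dialgebra is a dialgebra satisfying the two 0-identities and $(x\vdash y)\vdash z=x\vdash(y\vdash z)$, $(x\dashv y)\dashv z=x\dashv(y\dashv z)$, $(x\vdash y)\dashv z=x\vdash(y\dashv z)$; for such $D$, $D^{(+)}$ is $D$ with $a\vdash_+b=\tfrac12(a\vdash b+b\dashv a)$, $a\dashv_+b=\tfrac12(a\dashv b+b\vdash a)$. *)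

(* Defs.v *)
From HB Require Import structures.
From mathcomp Require Import all_boot all_order all_algebra.
Set Implicit Arguments. Unset Strict Implicit. Unset Printing Implicit Defensive.
Import GRing.Theory.
Local Open Scope ring_scope.

Inductive namon : Type := NVar (k : nat) | NMul (u v : namon).

Fixpoint occurs (i : nat) (t : namon) : bool :=
  match t with
  | NVar k => k == i
  | NMul u v => occurs i u || occurs i v
  end.

(* f(x_1,...,\dot x_i,...,x_n): each product uv becomes u -| v if x_i occurs
   in u and u |- v otherwise.  [vd] is |- and [dv] is -| . *)
Fixpoint ev_dot (T : Type) (vd dv : T -> T -> T) (i : nat) (x : nat -> T)
    (t : namon) : T :=
  match t with
  | NVar k => x k
  | NMul u v =>
      if occurs i u then dv (ev_dot vd dv i x u) (ev_dot vd dv i x v)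
      else vd (ev_dot vd dv i x u) (ev_dot vd dv i x v)
  end.

Declare Scope namon_scope.
Notation "u ** v" := (NMul u v) (at level 40, left associativity) : namon_scope.
Delimit Scope namon_scope with namon.

Definition J_pos : seq namon :=
  [:: (NVar 1 ** (NVar 2 ** (NVar 3 ** NVar 4)))%namon;
      ((NVar 2 ** (NVar 1 ** NVar 3)) ** NVar 4)%namon;
      (NVar 3 ** (NVar 2 ** (NVar 1 ** NVar 4)))%namon].
Definition J_neg : seq namon :=
  [:: ((NVar 1 ** NVar 2) ** (NVar 3 ** NVar 4))%namon;
      ((NVar 1 ** NVar 3) ** (NVar 2 ** NVar 4))%namon;
      ((NVar 3 ** NVar 2) ** (NVar 1 ** NVar 4))%namon].

Definition J_dot (K : fieldType) (V : lmodType K) (vd dv : V -> V -> V)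
    (i : nat) (x : nat -> V) : V :=
  \sum_(t <- J_pos) ev_dot vd dv i x t - \sum_(t <- J_neg) ev_dot vd dv i x t.

Definition bilinear_op (K : fieldType) (V : lmodType K) (op : V -> V -> V) :=
  (forall (a : K) (x y z : V), op (a *: x + y) z = a *: op x z + op y z) /\
  (forall (a : K) (x y z : V), op x (a *: y + z) = a *: op x y + op x z).

Definition zero_dialgebra (K : fieldType) (V : lmodType K) (vd dv : V -> V -> V) :=
  [/\ bilinear_op vd, bilinear_op dv,
      (forall x y z, vd (dv x y) z = vd (vd x y) z) &
      (forall x y z, dv x (vd y z) = dv x (dv y z))].

Definition jordan_dialgebra (K : fieldType) (V : lmodType K) (vd dv : V -> V -> V) :=
  [/\ zero_dialgebra vd dv,
      (forall x y, vd x y = dv y x) &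
      (forall (i : nat), (1 <= i <= 4)%N -> forall x : nat -> V, J_dot vd dv i x = 0)].

Definition assoc_dialgebra (K : fieldType) (V : lmodType K) (vd dv : V -> V -> V) :=
  [/\ zero_dialgebra vd dv,
      (forall x y z, vd (vd x y) z = vd x (vd y z)),
      (forall x y z, dv (dv x y) z = dv x (dv y z)) &
      (forall x y z, dv (vd x y) z = vd x (dv y z))].

Definition vd_plus (K : fieldType) (V : lmodType K) (vd dv : V -> V -> V) (a b : V) : V :=
  2%:R^-1 *: (vd a b + dv b a).
Definition dv_plus (K : fieldType) (V : lmodType K) (vd dv : V -> V -> V) (a b : V) : V :=
  2%:R^-1 *: (dv a b + vd b a).

Definition generated_by (K : fieldType) (V : lmodType K) (vd dv : V -> V -> V) (g : V) :=
  forall S : V -> Prop,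
    S 0 ->
    (forall (c : K) x y, S x -> S y -> S (c *: x + y)) ->
    (forall x y, S x -> S y -> S (vd x y)) ->
    (forall x y, S x -> S y -> S (dv x y)) ->
    S g -> forall v, S v.

Definition special_dialgebra (K : fieldType) (V : lmodType K) (vd dv : V -> V -> V) :=
  exists (D : lmodType K) (vdD dvD : D -> D -> D) (phi : V -> D),
    [/\ assoc_dialgebra vdD dvD,
        (forall (c : K) x y, phi (c *: x + y) = c *: phi x + phi y),
        injective phi,
        (forall x y, phi (vd x y) = vd_plus vdD dvD (phi x) (phi y)) &
        (forall x y, phi (dv x y) = dv_plus vdD dvD (phi x) (phi y))].

(* Main.v *)
From HB Require Import structures.
Require Import Defs.
From mathcomp Require Import all_boot all_order all_algebra.
From mathcomp Require Import ring.
From Stdlib Require Import ClassicalEpsilon.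
Import GRing.Theory.
Set Implicit Arguments. Unset Strict Implicit. Unset Printing Implicit Defensive.
Local Open Scope ring_scope.

#[local] Set Default Proof Using "All".
Section Act.
Variables (R : comNzRingType) (W : zmodType) (rho : R -> W -> W) (U : W -> W).
Hypothesis rhoD : forall a b x, rho (a + b) x = rho a x + rho b x.
Hypothesis rho_add : forall a x y, rho a (x + y) = rho a x + rho a y.
Hypothesis rhoM : forall a b x, rho (a * b) x = rho a (rho b x).
Hypothesis rho1 : forall x, rho 1 x = x.
Hypothesis U_add : forall x y, U (x + y) = U x + U y.
Hypothesis U_rho : forall a x, U (rho a x) = rho a (U x).

Lemma U0 : U 0 = 0.
Proof. by apply: (addrI (U 0)); rewrite -U_add !addr0. Qed.
Lemma rho0 x : rho 0 x = 0.
Proof. by apply: (addrI (rho 0 x)); rewrite -rhoD !addr0. Qed.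
Lemma rhox0 a : rho a 0 = 0.
Proof. by apply: (addrI (rho a 0)); rewrite -rho_add !addr0. Qed.

Lemma morph_sum (f : W -> W) (f0 : f 0 = 0) (fa : forall x y, f (x + y) = f x + f y)
   (I : Type) (r : seq I) (P : pred I) (F : I -> W) :
   f (\sum_(i <- r | P i) F i) = \sum_(i <- r | P i) f (F i).
Proof. exact: (big_morph f fa f0). Qed.

Lemma iterU0 k : iter k U 0 = 0.
Proof. by elim: k => //= k ->; rewrite U0. Qed.
Lemma iterU_add k x y : iter k U (x + y) = iter k U x + iter k U y.
Proof. by elim: k => //= k ->; rewrite U_add. Qed.

Definition actG (F : {poly R}) (x : W) : W := \sum_(k < size F) iter k U (rho F`_k x).

Lemma actG_bound (F : {poly R}) m x : (size F <= m)%N ->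
  actG F x = \sum_(k < m) iter k U (rho F`_k x).
Proof.
move=> hm; rewrite /actG (big_ord_widen m (fun k => iter k U (rho F`_k x)) hm).
rewrite big_mkcond; apply: eq_bigr => i _; case: ifP => // /negbT.
by rewrite -leqNgt => hi; rewrite nth_default // rho0 iterU0.
Qed.

Lemma actGD (F G : {poly R}) x : actG (F + G) x = actG F x + actG G x.
Proof.
pose m := maxn (size F) (size G).
rewrite (@actG_bound F m) ?leq_maxl // (@actG_bound G m) ?leq_maxr //.
rewrite (@actG_bound _ m) ?(leq_trans (size_polyD _ _)) //.
by rewrite -big_split; apply: eq_bigr => i _; rewrite coefD rhoD iterU_add.
Qed.

Lemma actG0 x : actG 0 x = 0.
Proof. by rewrite /actG size_poly0 big_ord0. Qed.

Lemma actG_add (F : {poly R}) x y : actG F (x + y) = actG F x + actG F y.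
Proof.
by rewrite /actG -big_split; apply: eq_bigr => i _; rewrite rho_add iterU_add.
Qed.

Lemma actGx0 (F : {poly R}) : actG F 0 = 0.
Proof. by apply: (addrI (actG F 0)); rewrite -actG_add !addr0. Qed.

Lemma actGC c x : actG c%:P x = rho c x.
Proof.
rewrite (@actG_bound _ 1) ?size_polyC ?leq_b1 // big_ord1 /=.
by rewrite coefC.
Qed.

Lemma iterU_sum k (I : Type) (r : seq I) (P : pred I) (F : I -> W) :
   iter k U (\sum_(i <- r | P i) F i) = \sum_(i <- r | P i) iter k U (F i).
Proof. exact: (big_morph (iter k U) (iterU_add k) (iterU0 k)). Qed.

Lemma actG_MX (F : {poly R}) x : actG (F * 'X) x = U (actG F x).
Proof.
rewrite (@actG_bound _ (size F).+1); last first.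
  by apply: (leq_trans (size_polyMleq _ _)); rewrite size_polyX addn2.
rewrite big_ord_recl coefMX eqxx rho0 /= add0r /actG (morph_sum U0 U_add).
by apply: eq_bigr => i _; rewrite coefMX /= add0n.
Qed.

Lemma iterU_rho k a x : iter k U (rho a x) = rho a (iter k U x).
Proof. by elim: k => //= k ->; rewrite U_rho. Qed.

Lemma actG_CM c (F : {poly R}) x : actG (c%:P * F) x = rho c (actG F x).
Proof.
rewrite (@actG_bound _ (size F)); last by rewrite mul_polyC size_scale_leq.
rewrite /actG (morph_sum (rhox0 c) (rho_add c)).
by apply: eq_bigr => i _; rewrite coefCM rhoM iterU_rho.
Qed.

Lemma actGM (F G : {poly R}) x : actG (F * G) x = actG F (actG G x).
Proof.
elim/poly_ind: F x => [|F c IH] x; first by rewrite mul0r !actG0.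
by rewrite mulrDl mulrAC actGD actG_MX IH actG_CM actGD actG_MX actGC.
Qed.

Lemma actGX x : actG 'X x = U x.
Proof. by rewrite -['X]mul1r actG_MX -[1]/(1%:P) actGC rho1. Qed.

Lemma actG1 x : actG 1 x = x.
Proof. by rewrite -[1]/(1%:P) actGC rho1. Qed.

Lemma actG_comm (Z : W -> W) (Z0 : Z 0 = 0) (Za : forall x y, Z (x + y) = Z x + Z y)
  (ZU : forall x, Z (U x) = U (Z x)) (Zr : forall a x, Z (rho a x) = rho a (Z x)) (F : {poly R}) x :
  Z (actG F x) = actG F (Z x).
Proof.
rewrite /actG (morph_sum Z0 Za); apply: eq_bigr => i _.
have: forall k y, Z (iter k U y) = iter k U (Z y) by elim=> //= k IH y; rewrite ZU IH.
by move->; rewrite Zr.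
Qed.

Lemma actG_U (F : {poly R}) x : U (actG F x) = actG F (U x).
Proof. exact: actG_comm U0 U_add (fun x => erefl) U_rho F x. Qed.

Lemma actG_rho a (F : {poly R}) x : rho a (actG F x) = actG F (rho a x).
Proof.
apply: actG_comm (rhox0 a) (rho_add a) _ _ F x.
  by move=> y; rewrite U_rho.
by move=> b y; rewrite -!rhoM mulrC.
Qed.

End Act.
#[local] Unset Default Proof Using.

Record AH (R : comNzRingType) (W : zmodType) (rho : R -> W -> W) (U : W -> W) : Prop := AHmk {
  ah1 : forall a b x, rho (a + b) x = rho a x + rho b x;
  ah2 : forall a x y, rho a (x + y) = rho a x + rho a y;
  ah3 : forall a b x, rho (a * b) x = rho a (rho b x);
  ah4 : forall x, rho 1 x = x;
  ah5 : forall x y, U (x + y) = U x + U y;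
  ah6 : forall a x, U (rho a x) = rho a (U x) }.

Section Wrap.
Variables (R : comNzRingType) (W : zmodType) (rho : R -> W -> W) (U : W -> W).
Hypothesis h : AH rho U.
Let h1 := ah1 h. Let h2 := ah2 h. Let h3 := ah3 h. Let h4 := ah4 h. Let h5 := ah5 h. Let h6 := ah6 h.
Lemma aD (F G : {poly R}) x : actG rho U (F + G) x = actG rho U F x + actG rho U G x.
Proof. exact: actGD. Qed.
Lemma a0 x : actG rho U 0 x = 0. Proof. exact: actG0. Qed.
Lemma aadd (F : {poly R}) x y : actG rho U F (x + y) = actG rho U F x + actG rho U F y.
Proof. exact: actG_add. Qed.
Lemma ax0 (F : {poly R}) : actG rho U F 0 = 0. Proof. exact: actGx0. Qed.
Lemma aC c x : actG rho U c%:P x = rho c x. Proof. exact: actGC. Qed.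
Lemma aMX (F : {poly R}) x : actG rho U (F * 'X) x = U (actG rho U F x).
Proof. exact: actG_MX. Qed.
Lemma aCM c (F : {poly R}) x : actG rho U (c%:P * F) x = rho c (actG rho U F x).
Proof. exact: actG_CM. Qed.
Lemma aM (F G : {poly R}) x : actG rho U (F * G) x = actG rho U F (actG rho U G x).
Proof. exact: actGM. Qed.
Lemma aX x : actG rho U 'X x = U x. Proof. exact: actGX. Qed.
Lemma a1 x : actG rho U 1 x = x. Proof. exact: actG1. Qed.
Lemma acomm (Z : W -> W) (Za : forall x y, Z (x + y) = Z x + Z y)
  (ZU : forall x, Z (U x) = U (Z x)) (Zr : forall a x, Z (rho a x) = rho a (Z x)) (F : {poly R}) x :
  Z (actG rho U F x) = actG rho U F (Z x).
Proof.
have Z0 : Z 0 = 0 by apply: (addrI (Z 0)); rewrite -Za !addr0.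
exact: actG_comm.
Qed.
Lemma aU (F : {poly R}) x : U (actG rho U F x) = actG rho U F (U x).
Proof. exact: actG_U. Qed.
Lemma aN (F : {poly R}) x : actG rho U (- F) x = - actG rho U F x.
Proof. by apply: (addrI (actG rho U F x)); rewrite -aD !subrr a0. Qed.
Lemma aB (F G : {poly R}) x : actG rho U (F - G) x = actG rho U F x - actG rho U G x.
Proof. by rewrite aD aN. Qed.
Lemma acommA (F G : {poly R}) x : actG rho U F (actG rho U G x) = actG rho U G (actG rho U F x).
Proof. by rewrite -!aM mulrC. Qed.

Lemma AH_nest (B : W -> W) (Ba : forall x y, B (x + y) = B x + B y)
  (BU : forall x, B (U x) = U (B x)) (Br : forall a x, B (rho a x) = rho a (B x)) :
  AH (actG rho U) B.
Proof.
split; [exact: aD | exact: aadd | exact: aM | exact: a1 | exact: Ba |].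
move=> F x; exact: acomm.
Qed.
End Wrap.

Lemma AH_scale (K : fieldType) (W : lmodType K) (U : W -> W)
  (Ul : forall c x y, U (c *: x + y) = c *: U x + U y) : AH (fun c (x : W) => c *: x) U.
Proof.
have Ua x y : U (x + y) = U x + U y by have := Ul 1 x y; rewrite !scale1r.
have U0 : U 0 = 0 by apply: (addrI (U 0)); rewrite -Ua !addr0.
split => /=; [by move=> *; rewrite scalerDl | by move=> *; rewrite scalerDr | by move=> *; rewrite scalerA | by move=> *; rewrite scale1r | exact: Ua |].
by move=> a x; have := Ul a x 0; rewrite !addr0 U0 addr0.
Qed.

Lemma zmA (V : zmodType) (x b c : V) : x - b + (c - x) = x + c - (x + b).
Proof. by rewrite addrC subrKA [x + c]addrC addrKA. Qed.
Lemma zmB (V : zmodType) (p q r s t : V) : (p + q) + (r + s) + t = (p + s + t) + (r + q).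
Proof.
rewrite -!addrA; congr (_ + _).
by rewrite [r + (s + t)]addrC addrCA [q + r]addrC -addrA.
Qed.
Lemma zmC (V : zmodType) (P Q R S t : V) : P + Q + (R + S) + t = R + Q + t + (P + S).
Proof.
rewrite -!addrA [Q + _]addrCA addrCA; congr (_ + _).
by rewrite [P + (Q + _)]addrCA [S + t]addrC [P + (t + S)]addrCA.
Qed.
Lemma zmD (V : zmodType) (p q r s t : V) : (p - q) - (r - s) + t = (p + s + t) - (r + q).
Proof.
rewrite opprB opprD -!addrA; congr (p + _).
rewrite addrCA; congr (s + _).
by rewrite addrC [- r + t]addrC -addrA.
Qed.

Section Main.
Variables (K : fieldType) (V : lmodType K) (vd dv : V -> V -> V).
Hypothesis hch : [pchar K] =i pred0.
Hypothesis hJ : jordan_dialgebra vd dv.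
Variable g : V.
Hypothesis hg : generated_by vd dv g.

Let zd : zero_dialgebra vd dv. Proof. by case: hJ. Qed.
Let comm : forall x y, vd x y = dv y x. Proof. by case: hJ. Qed.
Let hJd : forall i, (1 <= i <= 4)%N -> forall x : nat -> V, J_dot vd dv i x = 0.
Proof. by case: hJ. Qed.
Lemma dvE x y : dv x y = vd y x. Proof. by rewrite comm. Qed.
Lemma vdlinl a x y z : vd (a *: x + y) z = a *: vd x z + vd y z.
Proof. by case: zd => [[h _] _ _ _]; apply: h. Qed.
Lemma vdlinr a x y z : vd x (a *: y + z) = a *: vd x y + vd x z.
Proof. by case: zd => [[_ h] _ _ _]; apply: h. Qed.
Lemma vdS x y z : vd (vd y x) z = vd (vd x y) z.
Proof. by case: zd => [_ _ h _]; rewrite -h dvE. Qed.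
Lemma vdDl x y z : vd (x + y) z = vd x z + vd y z.
Proof. by have := vdlinl 1 x y z; rewrite !scale1r. Qed.
Lemma vdDr x y z : vd x (y + z) = vd x y + vd x z.
Proof. by have := vdlinr 1 x y z; rewrite !scale1r. Qed.
Lemma vd0l z : vd 0 z = 0.
Proof. by apply: (addrI (vd 0 z)); rewrite -vdDl !addr0. Qed.
Lemma vd0r z : vd z 0 = 0.
Proof. by apply: (addrI (vd z 0)); rewrite -vdDr !addr0. Qed.
Lemma vdZl a x z : vd (a *: x) z = a *: vd x z.
Proof. by have := vdlinl a x 0 z; rewrite !addr0 vd0l addr0. Qed.
Lemma vdZr a x z : vd x (a *: z) = a *: vd x z.
Proof. by have := vdlinr a x z 0; rewrite !addr0 vd0r addr0. Qed.
Lemma vdNl x z : vd (- x) z = - vd x z.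
Proof. by rewrite -scaleN1r vdZl scaleN1r. Qed.
Lemma vdNr x z : vd x (- z) = - vd x z.
Proof. by rewrite -scaleN1r vdZr scaleN1r. Qed.

Lemma identA a b c d :
  vd a (vd b (vd c d)) + vd (vd b (vd a c)) d + vd c (vd b (vd a d)) =
  vd (vd a b) (vd c d) + vd (vd a c) (vd b d) + vd (vd c b) (vd a d).
Proof.
have := hJd (isT : (1 <= 4 <= 4)%N)
  (fun k => if k == 1%N then a else if k == 2%N then b else if k == 3%N then c else d).
rewrite /J_dot /J_pos /J_neg !big_cons !big_nil /= !addr0 => /eqP.
by rewrite subr_eq0 !addrA => /eqP.
Qed.

Lemma identB a b c d :
  vd a (vd (vd c d) b) + vd d (vd (vd a c) b) + vd c (vd (vd a d) b) =
  vd (vd c d) (vd a b) + vd (vd a c) (vd d b) + vd (vd a d) (vd c b).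
Proof.
have := hJd (isT : (1 <= 2 <= 4)%N)
  (fun k => if k == 1%N then a else if k == 2%N then b else if k == 3%N then c else d).
rewrite /J_dot /J_pos /J_neg !big_cons !big_nil /= !addr0 !dvE => /eqP.
by rewrite subr_eq0 !addrA => /eqP.
Qed.

Definition Lg := vd g.
Definition Lg2 := vd (vd g g).

Lemma two_neq0 : (2%:R : K) != 0.
Proof. by move/pcharf0P: hch => ->. Qed.
Lemma three_neq0 : (3%:R : K) != 0.
Proof. by move/pcharf0P: hch => ->. Qed.

Lemma LgLg2 x : Lg (Lg2 x) = Lg2 (Lg x).
Proof.
have := identB g x g g; rewrite /Lg /Lg2 => h.
apply: (scalerI three_neq0).
by rewrite !scaler_nat !mulrS mulr0n !addr0 !addrA.
Qed.

Lemma Lglin c x y : Lg (c *: x + y) = c *: Lg x + Lg y. Proof. exact: vdlinr. Qed.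
Lemma Lg2lin c x y : Lg2 (c *: x + y) = c *: Lg2 x + Lg2 y. Proof. exact: vdlinr. Qed.
Lemma LgD x y : Lg (x + y) = Lg x + Lg y. Proof. exact: vdDr. Qed.
Lemma LgZ c x : Lg (c *: x) = c *: Lg x. Proof. exact: vdZr. Qed.
Lemma LgN x : Lg (- x) = - Lg x. Proof. exact: vdNr. Qed.

Let h1 : AH (fun c (x : V) => c *: x) Lg2 := AH_scale Lg2lin.
Notation act1 := (actG (fun c (x : V) => c *: x) Lg2).
Let hO : AH act1 Lg.
Proof.
apply: AH_nest => //; [exact: LgD | exact: LgLg2 | exact: LgZ].
Qed.
Notation act := (actG act1 Lg).
Notation P2 := {poly {poly K}}.

Lemma actX x : act 'X x = Lg x. Proof. apply: (aX hO x). Qed.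
Lemma actY x : act ('X%:P) x = Lg2 x. Proof. by rewrite (aC hO) (aX h1). Qed.
Lemma actc c x : act (c%:P%:P) x = c *: x. Proof. by rewrite (aC hO) (aC h1). Qed.
Lemma actZ (p : P2) c x : act p (c *: x) = c *: act p x.
Proof. by rewrite -!actc (acommA hO). Qed.
Lemma actlin (p : P2) c x y : act p (c *: x + y) = c *: act p x + act p y.
Proof. by rewrite (aadd hO) actZ. Qed.
Lemma actCM (p : P2) c x : act (c%:P%:P * p) x = c *: act p x.
Proof. by rewrite (aM hO) actc. Qed.

Definition Xp : P2 := 'X.
Definition Yp : P2 := ('X)%:P.
Fact Dp_key : unit. Proof. exact: tt. Qed.
Definition Dp : P2 := locked_with Dp_key (Yp - Xp ^+ 2).
Lemma DpE : Dp = Yp - Xp ^+ 2. Proof. exact: unlock. Qed.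

Definition dlt (p : P2) : {poly K} := (map_poly (comp_poly ('X^2)) p).['X].
Lemma dltD p q : dlt (p + q) = dlt p + dlt q.
Proof. by rewrite /dlt rmorphD hornerD. Qed.
Lemma dltB p q : dlt (p - q) = dlt p - dlt q.
Proof. by rewrite /dlt rmorphB hornerD hornerN. Qed.
Lemma dltM p q : dlt (p * q) = dlt p * dlt q.
Proof. by rewrite /dlt rmorphM hornerM. Qed.
Lemma dltX : dlt Xp = 'X.
Proof. by rewrite /dlt map_polyX hornerX. Qed.
Lemma dltY : dlt Yp = 'X ^+ 2.
Proof. by rewrite /dlt /Yp map_polyC hornerC /= comp_polyX. Qed.
Lemma dltC c : dlt (c%:P%:P) = c%:P.
Proof. by rewrite /dlt map_polyC hornerC /= comp_polyC. Qed.
Lemma dltD0 : dlt Dp = 0.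
Proof. by rewrite DpE dltB dltY expr2 dltM dltX -expr2 subrr. Qed.

Definition rho2 (c : K) (u : P2 * P2) : P2 * P2 := (c%:P%:P * u.1, c%:P%:P * u.2).
Definition M2 (u : P2 * P2) : P2 * P2 := (Xp * u.1 + Dp * u.2, u.1 + Xp * u.2).
Let h2 : AH rho2 M2.
Proof.
split.
- by move=> a b [u1 u2]; rewrite /rho2 !polyCD; apply: injective_projections => /=; ring.
- by move=> a [u1 u2] [v1 v2]; rewrite /rho2; apply: injective_projections => /=; ring.
- by move=> a b [u1 u2]; rewrite /rho2 /= !polyCM !mulrA.
- by move=> [u1 u2]; rewrite /rho2 /= !mul1r.
- by move=> [u1 u2] [v1 v2]; rewrite /M2; apply: injective_projections => /=; ring.
- by move=> a [u1 u2]; rewrite /M2 /rho2; apply: injective_projections => /=; ring.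
Qed.
Notation PX := (actG rho2 M2).
Definition Psi (F : {poly K}) : P2 := (PX F (1, 0)).1.
Definition Chi (F : {poly K}) : P2 := (PX F (1, 0)).2.
Lemma PsiD F G : Psi (F + G) = Psi F + Psi G. Proof. by rewrite /Psi (aD h2). Qed.
Lemma ChiD F G : Chi (F + G) = Chi F + Chi G. Proof. by rewrite /Chi (aD h2). Qed.
Lemma Psi0 : Psi 0 = 0. Proof. by rewrite /Psi (a0 h2). Qed.
Lemma Chi0 : Chi 0 = 0. Proof. by rewrite /Chi (a0 h2). Qed.
Lemma PsiN F : Psi (- F) = - Psi F. Proof. by rewrite /Psi (aN h2). Qed.
Lemma ChiN F : Chi (- F) = - Chi F. Proof. by rewrite /Chi (aN h2). Qed.
Lemma PsiMX F : Psi (F * 'X) = Xp * Psi F + Dp * Chi F. Proof. by rewrite /Psi (aMX h2). Qed.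
Lemma ChiMX F : Chi (F * 'X) = Psi F + Xp * Chi F. Proof. by rewrite /Chi (aMX h2). Qed.
Lemma PsiC c : Psi c%:P = c%:P%:P. Proof. by rewrite /Psi (aC h2) /= mulr1. Qed.
Lemma ChiC c : Chi c%:P = 0. Proof. by rewrite /Chi (aC h2) /= mulr0. Qed.
Lemma PsiCM c F : Psi (c%:P * F) = c%:P%:P * Psi F. Proof. by rewrite /Psi (aCM h2). Qed.
Lemma ChiCM c F : Chi (c%:P * F) = c%:P%:P * Chi F. Proof. by rewrite /Chi (aCM h2). Qed.
Lemma dltPsi F : dlt (Psi F) = F.
Proof.
elim/poly_ind: F => [|F c IH]; first by rewrite Psi0 /dlt rmorph0 horner0.
by rewrite PsiD PsiMX PsiC !dltD !dltM dltD0 dltX dltC IH mul0r addr0 mulrC.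
Qed.
Lemma Psirec F : Psi (F * 'X * 'X) =
  (Xp * Psi (F * 'X)) *+ 2 + Yp * Psi F - (Xp * (Xp * Psi F)) *+ 2.
Proof.
rewrite PsiMX ChiMX PsiMX.
have -> : Yp = Dp + Xp ^+ 2 by rewrite DpE subrK.
ring.
Qed.

Lemma actN (p : P2) x : act (- p) x = - act p x. Proof. exact: (aN hO). Qed.
Lemma actnat n x : act n%:R x = n%:R *: x.
Proof. by rewrite -[n%:R : P2]polyC_natr -[n%:R : {poly K}]polyC_natr actc. Qed.
Lemma actXp (q : P2) z : act (Xp * q) z = Lg (act q z). Proof. by rewrite (aM hO) actX. Qed.
Lemma actYp (q : P2) z : act (Yp * q) z = Lg2 (act q z). Proof. by rewrite (aM hO) actY. Qed.
Lemma Lgact (q : P2) z : Lg (act q z) = act q (Lg z). Proof. exact: (aU hO). Qed.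
Lemma Lg2act (q : P2) z : Lg2 (act q z) = act q (Lg2 z).
Proof. by rewrite -actY -(aM hO) mulrC (aM hO) actY. Qed.

Definition Phi (p : P2) : P2 := Psi (dlt p * 'X).
Definition KI (p : P2) := forall y, vd (act p g) y = act (Phi p) y.

Lemma R1 x y : vd (Lg (Lg x)) y =
  Lg2 (vd x y) + vd (Lg x) (Lg y) + vd (Lg x) (Lg y) - vd x (Lg (Lg y)) - Lg (Lg (vd x y)).
Proof.
have := identA g g x y; rewrite [vd (vd x g) _]vdS -/Lg -/Lg2 => <-.
by rewrite addrK addrC addKr.
Qed.

Lemma R2 x y : vd (Lg2 x) y =
  vd (Lg x) (Lg y) + Lg2 (vd x y) + vd (Lg x) (Lg y) - Lg (vd x (Lg y)) - Lg (vd x (Lg y)).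
Proof.
have := identA g x g y; rewrite [vd (vd x (vd g g)) _]vdS -/Lg -/Lg2 => <-.
by rewrite addrK addrC addKr.
Qed.


Lemma act_rec (P0 P1 : P2) y :
  act ((Xp * P1) *+ 2 + Yp * P0 - (Xp * (Xp * P0)) *+ 2) y =
  Lg (act P1 y) + Lg (act P1 y) + Lg2 (act P0 y) - Lg (Lg (act P0 y)) - Lg (Lg (act P0 y)).
Proof.
by rewrite (aB hO) (aD hO) !mulr2n !(aD hO) !actXp actYp opprD addrA.
Qed.

Lemma KI_X2 p : KI p -> KI (Xp * p) -> KI (Xp * (Xp * p)).
Proof.
move=> e0 e1 y; rewrite !actXp R1 !e0.
rewrite /KI actXp in e1; rewrite !e1.
rewrite /Phi !dltM !dltX.
have -> : 'X * ('X * dlt p) * 'X = dlt p * 'X * 'X * 'X by ring.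
rewrite Psirec act_rec.
have -> : 'X * dlt p * 'X = dlt p * 'X * 'X by ring.
by rewrite -!Lgact; congr (_ - _ - _); rewrite addrC addrCA addrC.
Qed.

Lemma KI_Y p : KI p -> KI (Xp * p) -> KI (Yp * p).
Proof.
move=> e0 e1 y; rewrite actYp R2 !e0.
rewrite /KI actXp in e1; rewrite !e1.
rewrite /Phi !dltM dltX dltY.
have -> : 'X ^+ 2 * dlt p * 'X = dlt p * 'X * 'X * 'X by ring.
rewrite Psirec act_rec.
have -> : 'X * dlt p * 'X = dlt p * 'X * 'X by ring.
by rewrite -!Lgact; congr (_ - _ - _); rewrite addrAC.
Qed.

Lemma dlt1 : dlt 1 = 1. Proof. by have := dltC 1; rewrite !polyC1. Qed.
Lemma Psi1 : Psi 1 = 1. Proof. by have := PsiC 1; rewrite !polyC1. Qed.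
Lemma Chi1 : Chi 1 = 0. Proof. by have := ChiC 1; rewrite !polyC1. Qed.
Lemma actlinp (c : K) (p q : P2) x : act (c%:P%:P * p + q) x = c *: act p x + act q x.
Proof. by rewrite (aD hO) actCM. Qed.
Lemma Philin c p q : Phi (c%:P%:P * p + q) = c%:P%:P * Phi p + Phi q.
Proof. by rewrite /Phi dltD dltM dltC mulrDl -mulrA PsiD PsiCM. Qed.

Lemma KI_lin c p q : KI p -> KI q -> KI (c%:P%:P * p + q).
Proof. by move=> e0 e1 y; rewrite actlinp vdlinl e0 e1 Philin actlinp. Qed.
Lemma KI1 : KI 1.
Proof.
move=> y; rewrite (a1 hO) /Phi dlt1 PsiMX Psi1 Chi1 mulr0 addr0 mulr1.
by rewrite actX.
Qed.
Lemma KIX : KI Xp.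
Proof.
move=> y; rewrite actX /Phi dltX PsiMX.
rewrite -[X in Psi X]mul1r -[X in Chi X]mul1r PsiMX ChiMX Psi1 Chi1.
rewrite !mulr0 !addr0 !mulr1.
have -> : Xp * Xp + Dp = Yp by rewrite DpE addrC expr2 subrK.
by rewrite actY.
Qed.

Lemma KI_all p : KI p /\ KI (Xp * p).
Proof.
pose G p := KI p /\ KI (Xp * p).
have GX q : G q -> G (Xp * q) by case=> e0 e1; split => //; apply: KI_X2.
have GY q : G q -> G (Yp * q).
  case=> e0 e1; split; first by apply: KI_Y.
  have -> : Xp * (Yp * q) = Yp * (Xp * q) by ring.
  by apply: KI_Y => //; apply: KI_X2.
have Glin c q r : G q -> G r -> G (c%:P%:P * q + r).
  case=> e0 e1 [e2 e3]; split; first by apply: KI_lin.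
  by rewrite mulrDr mulrCA; apply: KI_lin.
have G1 : G 1 by split; [exact: KI1 | rewrite mulr1; exact: KIX].
have G0 : G 0.
  rewrite /G /KI /Phi mulr0 /dlt rmorph0 horner0 mul0r Psi0.
  by split=> y; rewrite (a0 hO) vd0l (a0 hO).
have Gc c : G (c%:P%:P) by have := Glin c 1 0 G1 G0; rewrite mulr1 addr0.
have Gp (c : {poly K}) : G (c%:P).
  elim/poly_ind: c => [|d k IH]; first by rewrite polyC0.
  have := Glin 1 _ _ (GY _ IH) (Gc k); rewrite polyC1 mul1r.
  by rewrite polyCD polyCM /Yp mulrC.
elim/poly_ind: p => [//|q c IH].
have := Glin 1 _ _ (GX _ IH) (Gp c); rewrite polyC1 mul1r.
by rewrite /Xp mulrC.
Qed.

Lemma KI_main p y : vd (act p g) y = act (Phi p) y.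
Proof. by case: (KI_all p) => h _; apply: h. Qed.


Lemma gen v : exists p, act p g = v.
Proof.
move: v; apply: (@hg (fun w : V => exists p : P2, act p g = w)).
- by exists 0; rewrite (a0 hO).
- by move=> c x y [p <-] [q <-]; exists (c%:P%:P * p + q); rewrite actlinp.
- by move=> x y [p <-] [q <-]; exists (Phi p * q); rewrite KI_main (aM hO).
- by move=> x y [p <-] [q <-]; exists (Phi q * p); rewrite dvE KI_main (aM hO).
- by exists 1; rewrite (a1 hO).
Qed.
Lemma genb v : exists p, act p g == v.
Proof. by case: (gen v) => p hp; exists p; apply/eqP. Qed.
Definition pick (v : V) : P2 := xchoose (genb v).
Lemma pickP v : act (pick v) g = v.
Proof. exact/eqP/(xchooseP (genb v)). Qed.

Notation Dop := (act Dp).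
Lemma Dlin c x y : Dop (c *: x + y) = c *: Dop x + Dop y. Proof. exact: actlin. Qed.
Definition inR (n : V * V) : bool :=
  if excluded_middle_informative (exists y, n.2 = Dop y) then true else false.
Lemma inRP n : reflect (exists y, n.2 = Dop y) (inR n).
Proof. rewrite /inR; case: excluded_middle_informative => h; constructor => //. Qed.
Lemma inR_closed : @GRing.submod_closed K (V * V)%type inR.
Proof.
rewrite /GRing.submod_closed; split.
  by apply/inRP; exists 0; rewrite (ax0 hO).
move=> c u w /inRP [y1 f1] /inRP [y2 f2]; apply/inRP; exists (c *: y1 + y2).
by rewrite Dlin /= -f1 -f2.
Qed.
HB.instance Definition _ := GRing.isSubmodClosed.Build K (V * V)%type inR inR_closed.
Definition N := {n : V * V | inR n}.
HB.instance Definition _ := [isSub of N for sval].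
HB.instance Definition _ := [Choice of N by <:].
HB.instance Definition _ := [SubChoice_isSubLmodule of N by <:].

Lemma actDx (p : P2) x y : act p (x + y) = act p x + act p y.
Proof. exact: (aadd hO). Qed.
Lemma actNx (p : P2) x : act p (- x) = - act p x.
Proof. by rewrite -scaleN1r actZ scaleN1r. Qed.
Lemma actBx (p : P2) x y : act p (x - y) = act p x - act p y.
Proof. by rewrite actDx actNx. Qed.
Lemma act0x (p : P2) : act p 0 = 0. Proof. exact: (ax0 hO). Qed.
Lemma act0p x : act 0 x = 0. Proof. exact: (a0 hO). Qed.

Definition Uraw (n : V * V) : V * V := (Lg n.1 + n.2, Dop n.1 + Lg n.2).
Definition Vraw (n : V * V) : V * V := (Lg n.1 - n.2, Lg n.2 - Dop n.1).
Lemma UrawP n : inR n -> inR (Uraw n).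
Proof.
case/inRP=> y hy; apply/inRP; exists (n.1 + Lg y).
by rewrite /Uraw /= hy actDx Lgact.
Qed.
Lemma VrawP n : inR n -> inR (Vraw n).
Proof.
case/inRP=> y hy; apply/inRP; exists (Lg y - n.1).
by rewrite /Vraw /= hy actBx Lgact.
Qed.
Definition UN (n : N) : N := Sub (Uraw (val n)) (UrawP (valP n)).
Definition VN (n : N) : N := Sub (Vraw (val n)) (VrawP (valP n)).
Lemma valUN n : val (UN n) = Uraw (val n). Proof. by rewrite SubK. Qed.
Lemma valVN n : val (VN n) = Vraw (val n). Proof. by rewrite SubK. Qed.
Lemma valD (n m : N) : val (n + m) = val n + val m. Proof. by []. Qed.
Lemma valZ c (n : N) : val (c *: n) = c *: val n. Proof. by []. Qed.
Lemma ULin c x y : UN (c *: x + y) = c *: UN x + UN y.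
Proof.
apply: val_inj; rewrite valUN -[val (c *: x + y)]/(c *: val x + val y) -[val (c *: UN x + UN y)]/(c *: val (UN x) + val (UN y)) !valUN /Uraw.
move: (val x) (val y) => [a1 b1] [a2 b2]; apply: injective_projections => /=.
  by rewrite Lglin scalerDr addrACA.
by rewrite Dlin Lglin scalerDr addrACA.
Qed.
Lemma VLin c x y : VN (c *: x + y) = c *: VN x + VN y.
Proof.
apply: val_inj; rewrite valVN -[val (c *: x + y)]/(c *: val x + val y) -[val (c *: VN x + VN y)]/(c *: val (VN x) + val (VN y)) !valVN /Vraw.
move: (val x) (val y) => [a1 b1] [a2 b2]; apply: injective_projections => /=.
  by rewrite Lglin scalerDr scalerN opprD addrACA.
by rewrite Dlin Lglin scalerDr scalerN opprD addrACA.
Qed.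
Lemma UVcomm n : UN (VN n) = VN (UN n).
Proof.
apply: val_inj; rewrite valUN valVN valVN valUN /Uraw /Vraw.
case: (val n) => a b; apply: injective_projections => /=.
  by rewrite !LgD LgN addrA subrK opprD addrA addrAC addrK.
by rewrite actBx actDx !LgD LgN Lgact zmA.
Qed.

Let hU : AH (fun c (x : N) => c *: x) UN := AH_scale ULin.
Let hV : AH (fun c (x : N) => c *: x) VN := AH_scale VLin.
Notation actU := (actG (fun c (x : N) => c *: x) UN).
Notation actV := (actG (fun c (x : N) => c *: x) VN).

Lemma valU F n : val (actU F n) =
  (act (Psi F) (val n).1 + act (Chi F) (val n).2,
   act (Psi F) (val n).2 + act (Dp * Chi F) (val n).1).
Proof.
elim/poly_ind: F => [|F c IH].
  rewrite (a0 hU) Psi0 Chi0 mulr0 !act0p addr0; by [].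
rewrite (aD hU) (aMX hU) (aC hU).
rewrite -[val (UN _ + _)]/(val (UN (actU F n)) + c *: val n) valUN IH /Uraw.
rewrite PsiD PsiMX PsiC ChiD ChiMX ChiC addr0.
case: (val n) => a b; apply: injective_projections => /=.
  by rewrite !(aD hO) !actXp actc LgD zmB.
have e : Lg (act (Dp * Chi F) a) = act (Dp * (Xp * Chi F)) a by rewrite -actXp mulrCA.
rewrite !(aD hO) actXp actc actDx LgD mulrDr e -!(aM hO).
by rewrite (aD hO) zmC.
Qed.

Lemma valV F n : val (actV F n) =
  (act (Psi F) (val n).1 - act (Chi F) (val n).2,
   act (Psi F) (val n).2 - act (Dp * Chi F) (val n).1).
Proof.
elim/poly_ind: F => [|F c IH].
  rewrite (a0 hV) Psi0 Chi0 mulr0 !act0p subr0; by [].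
rewrite (aD hV) (aMX hV) (aC hV).
rewrite -[val (VN _ + _)]/(val (VN (actV F n)) + c *: val n) valVN IH /Vraw.
rewrite PsiD PsiMX PsiC ChiD ChiMX ChiC addr0.
case: (val n) => a b; apply: injective_projections => /=.
  by rewrite !(aD hO) !actXp actc LgD LgN zmD.
have e : Lg (act (Dp * Chi F) a) = act (Dp * (Xp * Chi F)) a by rewrite -actXp mulrCA.
rewrite !(aD hO) actXp actc actBx LgD LgN mulrDr e -!(aM hO).
by rewrite (aD hO) zmD.
Qed.

Lemma Lg0 : Lg 0 = 0. Proof. exact: vd0r. Qed.
Lemma WD0 p : act p g = 0 -> forall z,
  act (Psi (dlt p * 'X)) z = 0 /\ act (Dp * Chi (dlt p * 'X)) z = 0.
Proof.
move=> hp z.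
have e0 : forall z, act (Psi (dlt p * 'X)) z = 0.
  by move=> w; rewrite -[Psi _]/(Phi p) -KI_main hp vd0l.
split; first exact: e0.
have -> : Dp * Chi (dlt p * 'X) = Psi (dlt p * 'X * 'X) - Xp * Psi (dlt p * 'X).
  by rewrite PsiMX addrAC subrr add0r.
have -> : dlt p * 'X * 'X = dlt (Xp * p) * 'X by rewrite dltM dltX; ring.
rewrite (aB hO) -[Psi (dlt (Xp * p) * 'X)]/(Phi (Xp * p)) -KI_main actXp hp Lg0 vd0l.
by rewrite actXp e0 Lg0 subrr.
Qed.

Lemma WDU p : act p g = 0 -> forall n, actU (dlt p * 'X) n = 0.
Proof.
move=> hp n; apply: val_inj; rewrite valU.
case/inRP: (valP n) => y ->.
rewrite -(aM hO) [Chi _ * Dp]mulrC !(proj1 (WD0 hp _)) !(proj2 (WD0 hp _)) !addr0; by [].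
Qed.
Lemma WDV p : act p g = 0 -> forall n, actV (dlt p * 'X) n = 0.
Proof.
move=> hp n; apply: val_inj; rewrite valV.
case/inRP: (valP n) => y ->.
rewrite -(aM hO) [Chi _ * Dp]mulrC !(proj1 (WD0 hp _)) !(proj2 (WD0 hp _)) !subr0; by [].
Qed.

Definition Fn (n : N) : {poly K} := dlt (pick (val n).1) * 'X.
Definition Pn (n m : N) : N := actU (Fn n) m.
Definition Qn (n m : N) : N := actV (Fn n) m.

Lemma Prep p n : act p g = (val n).1 -> forall m, Pn n m = actU (dlt p * 'X) m.
Proof.
move=> hp m; have h0 : act (p - pick (val n).1) g = 0 by rewrite (aB hO) pickP hp subrr.
have := WDU h0 m; rewrite dltB mulrBl (aB hU) => /eqP; rewrite subr_eq0 => /eqP ->.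
by [].
Qed.
Lemma Qrep p n : act p g = (val n).1 -> forall m, Qn n m = actV (dlt p * 'X) m.
Proof.
move=> hp m; have h0 : act (p - pick (val n).1) g = 0 by rewrite (aB hO) pickP hp subrr.
have := WDV h0 m; rewrite dltB mulrBl (aB hV) => /eqP; rewrite subr_eq0 => /eqP ->.
by [].
Qed.

Lemma Pn_lin1 c n n' m : Pn (c *: n + n') m = c *: Pn n m + Pn n' m.
Proof.
rewrite (@Prep (c%:P%:P * pick (val n).1 + pick (val n').1)); last first.
  by rewrite actlinp !pickP.
by rewrite dltD dltM dltC mulrDl -mulrA (aD hU) (aCM hU).
Qed.
Lemma Qn_lin1 c n n' m : Qn (c *: n + n') m = c *: Qn n m + Qn n' m.
Proof.
rewrite (@Qrep (c%:P%:P * pick (val n).1 + pick (val n').1)); last first.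
  by rewrite actlinp !pickP.
by rewrite dltD dltM dltC mulrDl -mulrA (aD hV) (aCM hV).
Qed.
Lemma Pn_lin2 c n m m' : Pn n (c *: m + m') = c *: Pn n m + Pn n m'.
Proof. by rewrite /Pn (aadd hU) -!(aC hU) (acommA hU). Qed.
Lemma Qn_lin2 c n m m' : Qn n (c *: m + m') = c *: Qn n m + Qn n m'.
Proof. by rewrite /Qn (aadd hV) -!(aC hV) (acommA hV). Qed.

Lemma inR_ex (m : N) : exists q, (val m).2 = act Dp (act q g).
Proof. by case/inRP: (valP m) => y ->; case: (gen y) => q <-; exists q. Qed.

Lemma PnP n m z : Pn (Pn n m) z = Pn n (Pn m z).
Proof.
case: (inR_ex m) => q hq.
rewrite (@Prep (Psi (Fn n) * pick (val m).1 + Chi (Fn n) * Dp * q)); last first.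
  by rewrite /Pn valU /= (aD hO) !(aM hO) pickP hq.
rewrite dltD !dltM dltPsi dltD0 mulr0 mul0r addr0 -mulrA.
by rewrite (aM hU).
Qed.
Lemma PnQ n m z : Pn (Qn n m) z = Pn n (Pn m z).
Proof.
case: (inR_ex m) => q hq.
rewrite (@Prep (Psi (Fn n) * pick (val m).1 - Chi (Fn n) * Dp * q)); last first.
  by rewrite /Qn valV /= (aB hO) !(aM hO) pickP hq.
rewrite dltB !dltM dltPsi dltD0 mulr0 mul0r subr0 -mulrA.
by rewrite (aM hU).
Qed.
Lemma QnP n m z : Qn (Pn n m) z = Qn n (Qn m z).
Proof.
case: (inR_ex m) => q hq.
rewrite (@Qrep (Psi (Fn n) * pick (val m).1 + Chi (Fn n) * Dp * q)); last first.
  by rewrite /Pn valU /= (aD hO) !(aM hO) pickP hq.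
rewrite dltD !dltM dltPsi dltD0 mulr0 mul0r addr0 -mulrA.
by rewrite (aM hV).
Qed.
Lemma QnQ n m z : Qn (Qn n m) z = Qn n (Qn m z).
Proof.
case: (inR_ex m) => q hq.
rewrite (@Qrep (Psi (Fn n) * pick (val m).1 - Chi (Fn n) * Dp * q)); last first.
  by rewrite /Qn valV /= (aB hO) !(aM hO) pickP hq.
rewrite dltB !dltM dltPsi dltD0 mulr0 mul0r subr0 -mulrA.
by rewrite (aM hV).
Qed.
Lemma PnC n m z : Pn n (Pn m z) = Pn m (Pn n z).
Proof. exact: (acommA hU). Qed.
Lemma QnC n m z : Qn n (Qn m z) = Qn m (Qn n z).
Proof. exact: (acommA hV). Qed.
Lemma PQC n m z : Pn n (Qn m z) = Qn m (Pn n z).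
Proof.
have Ua : forall x y, UN (x + y) = UN x + UN y by exact: (ah5 hU).
have Uz : forall c x, UN (c *: x) = c *: UN x by exact: (ah6 hU).
rewrite /Pn /Qn; symmetry; apply: (acomm hU).
- by move=> x y; rewrite (aadd hV).
- move=> x; symmetry; apply: (acomm hV) => //.
  by move=> y; rewrite UVcomm.
- by move=> c x; rewrite -!(aC hV) (acommA hV).
Qed.

Lemma phiP (x : V) : inR (x, 0).
Proof. by apply/inRP; exists 0; rewrite act0x. Qed.
Definition phi (x : V) : N := Sub (x, 0) (phiP x).
Lemma valphi x : val (phi x) = (x, 0). Proof. by rewrite SubK. Qed.

Lemma half_two (v : V) : (2%:R : K)^-1 *: (v *+ 2) = v.
Proof.
by rewrite -scaler_nat scalerA mulVf ?scale1r // two_neq0.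
Qed.

Lemma phi_hom x y :
  phi (vd x y) = 2%:R^-1 *: (Pn (phi x) (phi y) + Qn (phi x) (phi y)).
Proof.
apply: val_inj; rewrite valphi.
rewrite -[val (_ *: _)]/(2%:R^-1 *: (val (Pn (phi x) (phi y)) + val (Qn (phi x) (phi y)))).
rewrite /Pn /Qn valU valV /Fn !valphi /= !act0x !addr0 !subr0 add0r sub0r.
rewrite -[Psi _]/(Phi (pick x)) -KI_main pickP.
apply: injective_projections => /=.
  by rewrite half_two.
by rewrite subrr scaler0.
Qed.

Lemma main_special : special_dialgebra vd dv.
Proof.
exists (N : lmodType K), (fun a b => Pn a b), (fun a b => Qn b a), phi.
split.
- split.
  + split.
    * by split=> *; [exact: Pn_lin1 | exact: Pn_lin2].
    * by split=> *; [exact: Qn_lin2 | exact: Qn_lin1].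
    * by move=> x y z; rewrite /= PnQ PnP PnC.
    * by move=> x y z; rewrite /= QnP QnQ QnC.
  + by move=> x y z; rewrite /= PnP.
  + by move=> x y z; rewrite /= QnQ.
  + by move=> x y z; rewrite /= PQC.
- move=> c x y; apply: val_inj; rewrite valphi.
  rewrite -[val (_ + _)]/(c *: val (phi x) + val (phi y)) !valphi.
  by apply: injective_projections => /=; rewrite ?scaler0 ?addr0.
- by move=> x y /(congr1 val); rewrite !valphi => -[].
- by move=> x y; rewrite phi_hom.
- by move=> x y; rewrite /dv_plus dvE phi_hom addrC.
Qed.
End Main.

Theorem mainTheorem3 (K : fieldType) (V : lmodType K) (vd dv : V -> V -> V) :
  [pchar K] =i pred0 ->
  jordan_dialgebra vd dv ->
  (exists g : V, generated_by vd dv g) ->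
  special_dialgebra vd dv.
Proof. by move=> hch hJ [g hg]; apply: main_special hch hJ g hg. Qed.
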